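(* Let $E^{II}_m(q;x,y)=\sum_{T\in\mathcal{T}^{II}_m}x^{l(T)}y^{u(T)}q^{\operatorname{inv}(T)}$ for $m\ge1$ and set $E^{II}_0(q;x,y)=x$. Then for all $n\ge1$, \[ E^{II}_{n+1}(q;x,y)=y\,E^{II}_n(q;x,y)+\sum_{k=0}^{n-2}q^{2(n-k-1)}{n-1\brack k}_q\,E^{II}_{k+1}(q;x,y)\,E^{II}_{n-k-1}(q;x,y). \]
   Context: An increasing binary tree on $[m]$ is a rooted tree on $\{1,\dots,m\}$ with labels increasing along paths from the root, each vertex having at most one (distinguished) left child and at most one right child. $\mathcal{T}^{II}_m$ is the set of André II trees on $[m]$: increasing binary trees in which, for every vertex with at least one child, the minimum label of the left subtree is greater than the minimum label of the right subtree (minimum of the empty tree $=+\infty$). $l(T)$ is the number of leaves, $u(T)$ the number of vertices with exactly one child. An inversion of $T$ is a pair $(i,j)$ of vertices with $i>j$ such that either (1) $j$ belongs to the right subtree of some vertex $v$ on the path from the root to $i$ whose left child is on that path; or (2) $j$ is on the path from the root to $i$ and the left child of $j$ is on that path; $\operatorname{inv}(T)$ counts inversions. ${n\brack k}_q=\frac{(q;q)_n}{(q;q)_k(q;q)_{n-k}}$, $(q;q)_n=\prod_{i=1}^n(1-q^i)$. *)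

(* Defs.v *)
From HB Require Import structures.
From mathcomp Require Import all_boot all_order all_algebra.
Set Implicit Arguments. Unset Strict Implicit. Unset Printing Implicit Defensive.
Import Order.TTheory GRing.Theory Num.Theory.

(* Binary trees with nat labels; Leaf = empty tree, Node l v r = vertex v
   with left subtree l and right subtree r. *)
Inductive btree := Leaf | Node of btree & nat & btree.

Fixpoint btree_eqb (s t : btree) : bool :=
  match s, t with
  | Leaf, Leaf => true
  | Node l v r, Node l' v' r' => [&& btree_eqb l l', v == v' & btree_eqb r r']
  | _, _ => false
  end.

Lemma btree_eqbP : Equality.axiom btree_eqb.
Proof.
elim=> [|l IHl v r IHr] [|l' v' r'] /=; try by constructor.
case: (IHl l') => [->|nl] /=; last by right; congruence.
case: (v =P v') => [->|nv] /=; last by right; congruence.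
by case: (IHr r') => [->|nr]; [left | right; congruence].
Qed.

HB.instance Definition _ := hasDecEq.Build btree btree_eqbP.

Fixpoint labels (t : btree) : seq nat :=
  match t with Leaf => [::] | Node l v r => labels l ++ v :: labels r end.

Fixpoint subtrees (t : btree) : seq btree :=
  match t with Leaf => [::] | Node l v r => t :: subtrees l ++ subtrees r end.

Definition root_label (t : btree) : option nat :=
  if t is Node _ v _ then Some v else None.

Fixpoint increasing (t : btree) : bool :=
  match t with
  | Leaf => true
  | Node l v r =>
      [&& (if root_label l is Some a then v < a else true),
          (if root_label r is Some b then v < b else true),
          increasing l & increasing r]
  end.

(* minimum label of a tree; None stands for +infinity (empty tree) *)
Definition min_label (t : btree) : option nat :=
  if labels t is a :: s then Some (foldr minn a s) else None.

Definition gt_ext (a b : option nat) : bool :=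
  match a, b with
  | None, Some _ => true
  | Some a, Some b => b < a
  | _, _ => false
  end.

Fixpoint andre_cond (t : btree) : bool :=
  match t with
  | Leaf => true
  | Node l v r =>
      [&& ((l == Leaf) && (r == Leaf)) || gt_ext (min_label l) (min_label r),
          andre_cond l & andre_cond r]
  end.

Definition andreII (m : nat) (t : btree) : bool :=
  [&& perm_eq (labels t) (iota 1 m), increasing t & andre_cond t].

Fixpoint leaves (t : btree) : nat :=
  match t with
  | Leaf => 0
  | Node Leaf _ Leaf => 1
  | Node l _ r => leaves l + leaves r
  end.

Fixpoint unary (t : btree) : nat :=
  match t with
  | Leaf => 0
  | Node l _ r =>
      ((l == Leaf) (+) (r == Leaf)) + unary l + unary r
  end.

Definition is_inv (t : btree) (i j : nat) : bool :=
  (j < i) &&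
  has (fun s => if s is Node l v r then
                  (i \in labels l) && ((j \in labels r) || (j == v))
                else false) (subtrees t).

Definition inv_tree (t : btree) : nat :=
  size [seq p <- [seq (i, j) | i <- labels t, j <- labels t] | is_inv t p.1 p.2].

Fixpoint all_trees (L : seq nat) (h : nat) : seq btree :=
  match h with
  | 0 => [:: Leaf]
  | h'.+1 => Leaf :: flatten [seq [seq Node l v r | v <- L, r <- all_trees L h']
                                 | l <- all_trees L h']
  end.

Local Open Scope ring_scope.

(* E^{II}_m(q;x,y); a tree on [m] has m vertices hence height <= m,
   so all André II trees on [m] appear in all_trees (iota 1 m) m. *)
Definition EII (R : comRingType) (q x y : R) (m : nat) : R :=
  if m is 0 then x else
  \sum_(t <- undup (all_trees (iota 1 m) m) | andreII m t)
     x ^+ leaves t * y ^+ unary t * q ^+ inv_tree t.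

Definition qpoch (R : comRingType) (q : R) (n : nat) : R :=
  \prod_(1 <= i < n.+1) (1 - q ^+ i).

Definition qbinom (R : fieldType) (q : R) (n k : nat) : R :=
  qpoch q n / (qpoch q k * qpoch q (n - k)).

(* Main.v *)
Require Import Defs.
From HB Require Import structures.
From mathcomp Require Import all_boot all_order all_algebra.
From mathcomp Require Import zify ring.
Import GRing.Theory.
Set Implicit Arguments. Unset Strict Implicit.

Fixpoint splits (s : seq nat) : seq (seq nat * seq nat) :=
  if s is x :: s' then
    [seq (x :: p.1, p.2) | p <- splits s'] ++ [seq (p.1, x :: p.2) | p <- splits s']
  else [:: ([::], [::])].

Lemma splits_perm s p : p \in splits s -> perm_eq (p.1 ++ p.2) s.
Proof.
elim: s p => [|x s IH] [A B] /=; first by rewrite inE => /eqP [-> ->].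
rewrite mem_cat => /orP [] /mapP [[A' B'] /IH /= H [-> ->]] /=.
  by rewrite perm_cons.
by rewrite -cat1s perm_catCA /= perm_cons.
Qed.

Lemma splits_sub s p : p \in splits s -> subseq p.1 s && subseq p.2 s.
Proof.
elim: s p => [|x s IH] [A B] /=; first by rewrite inE => /eqP [-> ->].
rewrite mem_cat => /orP [] /mapP [[A' B'] /IH /= /andP [H1 H2] [-> ->]] /=.
  by rewrite eqxx H1 /=; apply: (subseq_trans H2 (subseq_cons _ _)).
rewrite eqxx H2 andbT; apply: (subseq_trans H1 (subseq_cons _ _)).
Qed.

Lemma splits_filter (P : pred nat) s :
  ([seq z <- s | P z], [seq z <- s | ~~ P z]) \in splits s.
Proof.
elim: s => [|x s IH] /=; first by rewrite inE.
rewrite mem_cat; case: (P x) => /=.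
  by apply/orP; left; apply/mapP; exists ([seq z <- s | P z], [seq z <- s | ~~ P z]).
by apply/orP; right; apply/mapP; exists ([seq z <- s | P z], [seq z <- s | ~~ P z]).
Qed.

Lemma splits_map f s :
  splits (map f s) = [seq (map f p.1, map f p.2) | p <- splits s].
Proof.
elim: s => [|x s IH] //=.
rewrite IH map_cat -!map_comp; congr (_ ++ _); by apply: eq_map => -[].
Qed.

Fixpoint gen (fu : nat) (s : seq nat) : seq btree :=
  if fu is fu'.+1 then
    match s with
    | [::] => [:: Leaf]
    | [:: v] => [:: Node Leaf v Leaf]
    | v :: a :: s' =>
        flatten [seq [seq Node l v r | l <- gen fu' p.1, r <- gen fu' (a :: p.2)]
                | p <- splits s']
    end
  else [:: Leaf].

Lemma splits_size s p : p \in splits s -> size p.1 + size p.2 = size s.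
Proof. by move/splits_perm/perm_size; rewrite size_cat. Qed.

Lemma gen_fuel f1 f2 s : size s <= f1 -> size s <= f2 -> gen f1 s = gen f2 s.
Proof.
elim: f1 f2 s => [|f1 IH] [|f2] [|v [|a s]] //= H1 H2.
congr flatten; apply/eq_in_map => -[A B] Hp.
have /= E := @splits_size s (A, B) Hp.
rewrite !ltnS in H1 H2.
rewrite /= (IH f2 A) ?(IH f2 (a :: B)) //= ; lia.
Qed.

Fixpoint tmap (f : nat -> nat) (t : btree) : btree :=
  if t is Node l v r then Node (tmap f l) (f v) (tmap f r) else Leaf.

Lemma gen_map f fu s : gen fu (map f s) = map (tmap f) (gen fu s).
Proof.
elim: fu s => [|fu IH] [|v [|a s]] //=.
rewrite splits_map -map_comp map_flatten -map_comp; congr flatten.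
apply: eq_map => p /=.
rewrite IH -map_cons IH.
elim: (gen fu p.1) => //= l L IHL.
by rewrite map_cat IHL -!map_comp.
Qed.

Lemma foldr_minn_mem a s : foldr minn a s \in a :: s.
Proof.
elim: s => [|b s IH] /=; first by rewrite inE.
rewrite /minn; case: ifP => _; first by rewrite !inE eqxx orbT.
by move: IH; rewrite !inE => /orP [->|->]; rewrite ?orbT.
Qed.

Lemma foldr_minn_le a s y : y \in a :: s -> foldr minn a s <= y.
Proof.
elim: s y => [|b s IH] y /=; first by rewrite inE => /eqP ->.
rewrite !inE => /or3P [/eqP ->|/eqP ->|H].
- by rewrite geq_min (IH a) ?orbT ?mem_head.
- by rewrite geq_min leqnn.
- by rewrite geq_min (IH y) ?orbT // inE H orbT.
Qed.

Lemma min_label_some t z :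
  min_label t = Some z -> z \in labels t /\ (forall y, y \in labels t -> z <= y).
Proof.
rewrite /min_label; case: (labels t) => // a s [<-]; split.
  exact: foldr_minn_mem.
exact: foldr_minn_le.
Qed.

Lemma min_label_ex t y : y \in labels t -> exists z, min_label t = Some z.
Proof. by rewrite /min_label; case: (labels t) => // a s _; eexists. Qed.

Lemma min_label_leaf : min_label Leaf = None.
Proof. by []. Qed.

Lemma root_in t z : root_label t = Some z -> z \in labels t.
Proof. by case: t => //= l v r [<-]; rewrite mem_cat inE eqxx orbT. Qed.

Lemma inc_le t v : increasing t -> root_label t = Some v ->
  forall z, z \in labels t -> v <= z.
Proof.
elim: t v => //= l IHl w r IHr v /and4P [Hl Hr il ir] [<-] z.
rewrite mem_cat inE => /or3P [H|/eqP ->|H] //.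
- case El: (root_label l) Hl => [a|]; last by case: l El H {IHl il}.
  move=> Ha; apply: ltnW; apply: (leq_trans Ha); exact: IHl il El z H.
- case Er: (root_label r) Hr => [a|]; last by case: r Er H {IHr ir}.
  move=> Ha; apply: ltnW; apply: (leq_trans Ha); exact: IHr ir Er z H.
Qed.

Lemma inc_lt l v r : increasing (Node l v r) ->
  forall z, z \in labels l ++ labels r -> v < z.
Proof.
move=> /= /and4P [Hl Hr il ir] z; rewrite mem_cat => /orP [H|H].
- case El: (root_label l) Hl => [a|]; last by case: l El H {il}.
  move=> Ha; apply: (leq_trans Ha); exact: inc_le il El z H.
- case Er: (root_label r) Hr => [a|]; last by case: r Er H {ir}.
  move=> Ha; apply: (leq_trans Ha); exact: inc_le ir Er z H.
Qed.

Lemma sorted_cons_lt v s : sorted ltn (v :: s) -> forall z, z \in s -> v < z.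
Proof. by move=> /= /(order_path_min ltn_trans) /allP. Qed.

Lemma gen_spec1 fu s t : size s <= fu -> sorted ltn s -> t \in gen fu s ->
  [/\ perm_eq (labels t) s, increasing t & andre_cond t].
Proof.
elim: fu s t => [|fu IH] [|v [|a s]] t //=; rewrite ?inE.
- by move=> _ _ /eqP ->.
- by move=> _ _ /eqP ->.
- by move=> _ _ /eqP ->.
move=> Hs Hsort /flattenP [L /mapP [[A B] Hp ->]] /allpairsP [[l r] /= [Hl Hr ->]].
have /= Hperm := splits_perm Hp.
have /andP [/= sA sB] := splits_sub Hp.
have ssort : sorted ltn (a :: s) by case/andP: Hsort.
have Asort : sorted ltn A.
  by apply: (subseq_sorted ltn_trans sA); apply: (path_sorted ssort).
have aBsort : sorted ltn (a :: B).
  by apply: (subseq_sorted ltn_trans _ ssort); rewrite /= eqxx.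
have Hsz : (size A + size B = size s)%N by rewrite -size_cat (perm_size Hperm).
have szA : size A <= fu by rewrite ltnS in Hs; lia.
have szB : size (a :: B) <= fu.
  rewrite /= -ltnS; apply: leq_trans Hs; rewrite !ltnS -Hsz; exact: leq_addl.
have [pl il al] := IH A l szA Asort Hl.
have [pr ir ar] := IH (a :: B) r szB aBsort Hr.
have vlt := @sorted_cons_lt v (a :: s) Hsort.
have alt := sorted_cons_lt ssort.
have memA z : z \in A -> z \in s by move=> H; rewrite -(perm_mem Hperm) mem_cat H.
have memB z : z \in B -> z \in s by move=> H; rewrite -(perm_mem Hperm) mem_cat H orbT.
split.
- rewrite -cat1s perm_catCA /= perm_cons.
  apply: (perm_trans (perm_cat pl pr)).
  by rewrite -cat1s perm_catCA /= perm_cons.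
- rewrite il ir !andbT; apply/andP; split.
  + case El: (root_label l) => [z|] //; apply: vlt.
    by rewrite inE memA ?orbT // -(perm_mem pl) root_in.
  + case Er: (root_label r) => [z|] //; apply: vlt.
    have := root_in Er; rewrite (perm_mem pr) inE => /orP [/eqP ->|H].
      by rewrite inE eqxx.
    by rewrite inE memB ?orbT.
- rewrite al ar !andbT; apply/orP; right.
  have ar' : a \in labels r by rewrite (perm_mem pr) inE eqxx.
  have [zr Er] := min_label_ex ar'.
  have [_ zra] := min_label_some Er.
  have zrle := zra a ar'.
  rewrite Er; case El: (min_label l) => [zl|] //=.
  have [zlin _] := min_label_some El.
  apply: (leq_ltn_trans zrle); apply: alt; apply: memA; by rewrite -(perm_mem pl).
Qed.

Lemma labels_nil t : size (labels t) = 0 -> t = Leaf.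
Proof. by case: t => //= l v r; rewrite size_cat /= addnS. Qed.

Lemma sorted_uniq_ltn s : sorted ltn s -> uniq s.
Proof. by rewrite ltn_sorted_uniq_leq => /andP []. Qed.

Lemma gen_spec2 fu s t : size s <= fu -> sorted ltn s -> perm_eq (labels t) s ->
  increasing t -> andre_cond t -> t \in gen fu s.
Proof.
elim: fu s t => [|fu IH] s t.
  rewrite leqn0 => /nilP -> _ /perm_size /labels_nil -> _ _ /=; by rewrite inE.
case: s => [|v [|a s]].
- by move=> _ _ /perm_size /labels_nil -> _ _ /=; rewrite inE.
- case: t => [|l w r] _ _ /[dup] /perm_size; first by [].
  rewrite /= size_cat /= addnS => /eqP; rewrite eqSS addn_eq0 => /andP [].
  move=> /eqP/labels_nil El /eqP/labels_nil Er; subst l r => /= /perm_mem Hm _ _.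
  have := Hm w; rewrite !mem_seq1 eqxx => /esym/eqP Ew.
  by rewrite Ew.
case: t => [|l w r]; first by move=> _ _ /perm_size.
move=> Hs Hsort Hperm Hinc Hand.
have Huniq : uniq (labels (Node l w r)) by rewrite (perm_uniq Hperm) sorted_uniq_ltn.
have ssort : sorted ltn (a :: s) by case/andP: Hsort.
have vlt := @sorted_cons_lt v (a :: s) Hsort.
have alt := sorted_cons_lt ssort.
have wlt := inc_lt Hinc.
have Hm := perm_mem Hperm.
have Ewv : w = v.
  have : v \in labels (Node l w r) by rewrite Hm mem_head.
  rewrite /= mem_cat inE orbCA => /orP [/eqP //|Hv].
  have := wlt v; rewrite mem_cat Hv => /(_ isT) wv.
  have : w \in labels (Node l w r) by rewrite /= mem_cat inE eqxx orbT.
  rewrite Hm inE => /orP [/eqP //|Hw].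
  by have := vlt w Hw; rewrite ltnNge ltnW.
subst w.
have Hperm' : perm_eq (labels l ++ labels r) (a :: s).
  by move: Hperm; rewrite /= -cat1s perm_catCA /= perm_cons.
have Hm' := perm_mem Hperm'.
have usa : uniq (a :: s) by apply: sorted_uniq_ltn.
move: usa; rewrite -(perm_uniq Hperm') cat_uniq => /and3P [ul dlr ur].
have usa : uniq (a :: s) by apply: sorted_uniq_ltn.
move: Hinc => /= /and4P [_ _ il ir].
move: Hand => /= /and3P [Hg al ar].
have Hg' : gt_ext (min_label l) (min_label r).
  move: Hg; case: (boolP ((l == Leaf) && (r == Leaf))) => [/andP [/eqP El /eqP Er] _ | _ //].
  by move: Hperm'; rewrite El Er => /perm_size.
have ar' : a \in labels r.
  have : a \in labels l ++ labels r by rewrite Hm' mem_head.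
  rewrite mem_cat => /orP [Hal|//].
  have [zl El] := min_label_ex Hal.
  have [zlin zlle] := min_label_some El.
  move: Hg'; rewrite El; case Er: (min_label r) => [zr|] //= zrzl.
  have [zrin _] := min_label_some Er.
  have : zr \in a :: s by rewrite -Hm' mem_cat zrin orbT.
  rewrite inE => /orP [/eqP zra|zrs].
    by have := zlle a Hal; rewrite -zra leqNgt zrzl.
  have := alt zr zrs; have := zlle a Hal => H1 H2.
  by have := leq_ltn_trans H1 (ltn_trans H2 zrzl); rewrite ltnn.
have anl : a \notin labels l.
  by apply: (hasPn dlr); rewrite ar'.
set A := [seq z <- s | z \in labels l].
set B := [seq z <- s | z \notin labels l].
have pl : perm_eq (labels l) A.
  apply: uniq_perm => //; first by rewrite filter_uniq //; case/andP: usa.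
  move=> z; rewrite mem_filter; apply/idP/idP => [zl|/andP [] //].
  rewrite zl /=; have : z \in a :: s by rewrite -Hm' mem_cat zl.
  rewrite inE => /orP [/eqP Eza|//]; by move: anl; rewrite -Eza zl.
have pr : perm_eq (labels r) (a :: B).
  apply: uniq_perm => //.
    rewrite /= mem_filter filter_uniq ?andbT; last by case/andP: usa.
    by case/andP: usa => /negbTE -> _; rewrite andbF.
  move=> z; rewrite inE mem_filter; apply/idP/idP => [zr|].
    have : z \in a :: s by rewrite -Hm' mem_cat zr orbT.
    rewrite inE => /orP [->//|->]; rewrite andbT orbC.
    by apply/orP; left; apply: (hasPn dlr).
  move=> /orP [/eqP -> //|/andP [znl zs]].
  have : z \in a :: s by rewrite inE zs orbT.
  by rewrite -Hm' mem_cat (negbTE znl).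
have Hsz : size s < fu by rewrite /= !ltnS in Hs.
have Asort : sorted ltn A by apply: sorted_filter => //; [exact: ltn_trans | exact: path_sorted ssort].
have aBsort : sorted ltn (a :: B).
  apply: (subseq_sorted ltn_trans _ ssort); by rewrite /= eqxx filter_subseq.
have szA : size A <= fu by apply: leq_trans (ltnW Hsz); rewrite size_filter count_size.
have szB : size (a :: B) <= fu by rewrite /= size_filter (leq_ltn_trans (count_size _ _) Hsz).
have Hl := IH A l szA Asort pl il al.
have Hr := IH (a :: B) r szB aBsort pr ir ar.
rewrite /=; apply/flattenP.
exists [seq Node l0 v r0 | l0 <- gen fu A, r0 <- gen fu (a :: B)].
  apply/mapP; exists (A, B) => //; exact: splits_filter.
by apply/allpairsP; exists (l, r).
Qed.

Lemma flatten_map_uniq (S T : eqType) (F : S -> seq T) (ps : seq S) :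
  uniq ps -> {in ps, forall p, uniq (F p)} ->
  {in ps &, forall p1 p2 t, t \in F p1 -> t \in F p2 -> p1 = p2} ->
  uniq (flatten (map F ps)).
Proof.
elim: ps => [|p ps IH] //= /andP [pn ups] HF Hd.
have up : uniq (F p) by apply: HF; rewrite mem_head.
have ur : uniq (flatten (map F ps)).
  apply: IH => //.
  - by move=> z zin; apply: HF; rewrite inE zin orbT.
  - by move=> p1 p2 H1 H2; apply: Hd; rewrite inE ?H1 ?H2 orbT.
rewrite cat_uniq up ur /=.
rewrite andbT; apply/hasPn => t /flattenP [L /mapP [p' p'in ->]] tin.
apply/negP => tp.
have E := Hd p p' (mem_head _ _) ltac:(by rewrite inE p'in orbT) t tp tin.
by move: pn; rewrite E p'in.
Qed.

Lemma splits_uniq s : uniq s -> uniq (splits s).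
Proof.
elim: s => [|x s IH] //= /andP [xs us].
rewrite cat_uniq !map_inj_uniq ?IH //; last first.
- by move=> [A B] [A' B'] /= [-> ->].
- by move=> [A B] [A' B'] /= [-> ->].
rewrite andbT; apply/hasPn => -[A B] /mapP [[A' B'] H' [-> ->]].
apply/mapP => -[[A'' B''] H'' [E1 E2]].
have /andP [/= _ s2] := splits_sub H''.
by have := @mem_subseq _ _ _ s2 x; rewrite -E2 mem_head (negbTE xs) => /(_ isT).
Qed.

Lemma gen_uniq fu s : size s <= fu -> sorted ltn s -> uniq (gen fu s).
Proof.
elim: fu s => [|fu IH] [|v [|a s]] //= Hs Hsort.
have ssort : sorted ltn (a :: s) by case/andP: Hsort.
have sS : sorted ltn s := path_sorted ssort.
have Hsz : size s < fu by rewrite !ltnS in Hs.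
have info p : p \in splits s -> [/\ size p.1 <= fu, size (a :: p.2) <= fu,
    sorted ltn p.1 & sorted ltn (a :: p.2)].
  move=> Hp; have /= E := @splits_size s p Hp.
  have /andP [sA sB] := splits_sub Hp.
  split.
  - by apply: leq_trans (ltnW Hsz); rewrite -E leq_addr.
  - by rewrite /=; apply: leq_ltn_trans Hsz; rewrite -E leq_addl.
  - by apply: (subseq_sorted ltn_trans sA).
  - change (sorted ltn (a :: p.2)); apply: (subseq_sorted ltn_trans _ ssort); by rewrite /= eqxx.
apply: flatten_map_uniq.
- by apply: splits_uniq; apply: sorted_uniq_ltn.
- move=> p Hp; have [h1 h2 h3 h4] := info p Hp.
  apply: allpairs_uniq; try exact: IH.
  by move=> [l r] [l' r'] _ _ /= [-> ->].
- move=> [A B] [A' B'] H1 H2 t /allpairsP [[l r] /= [l1 r1 ->]].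
  move=> /allpairsP [[l' r'] /= [l2 r2 [E1 E2]]]; subst l' r'.
  have [a1 b1 c1 d1] := info _ H1; have [a2 b2 c2 d2] := info _ H2.
  have [pl1 _ _] := gen_spec1 a1 c1 l1.
  have [pl2 _ _] := gen_spec1 a2 c2 l2.
  have [pr1 _ _] := gen_spec1 b1 d1 r1.
  have [pr2 _ _] := gen_spec1 b2 d2 r2.
  have -> : A = A'.
    apply: (irr_sorted_eq ltn_trans ltnn) => // z.
    by rewrite -(perm_mem pl1) (perm_mem pl2).
  have [->] : a :: B = a :: B'.
    apply: (irr_sorted_eq ltn_trans ltnn) => // z.
    by rewrite -(perm_mem pr1) (perm_mem pr2).
  by [].
Qed.

Fixpoint height (t : btree) : nat :=
  if t is Node l _ r then (maxn (height l) (height r)).+1 else 0.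

Lemma height_le t : height t <= size (labels t).
Proof.
elim: t => //= l IHl v r IHr; rewrite size_cat /= addnS ltnS geq_max.
by rewrite (leq_trans IHl (leq_addr _ _)) (leq_trans IHr (leq_addl _ _)).
Qed.

Lemma all_trees_mem (L : seq nat) h t : height t <= h -> all (mem L) (labels t) ->
  t \in all_trees L h.
Proof.
elim: h t => [|h IH] [|l v r] //=; rewrite ?inE // ltnS geq_max => /andP [hl hr].
rewrite all_cat /= => /and3P [al vL ar].
apply/flattenP; exists ([seq Node l v0 r0 | v0 <- L, r0 <- all_trees L h] : seq btree).
  by apply/mapP; exists l => //; apply: IH.
by apply/allpairsP; exists (v, r) => /=; split => //; apply: IH.
Qed.

Definition cross (A B : seq nat) : nat := \sum_(i <- A) \sum_(j <- B) (j < i).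

Fixpoint invr (t : btree) : nat :=
  if t is Node l v r then invr l + invr r + cross (labels l) (v :: labels r) else 0.

Lemma count_allpairs (P : nat -> nat -> bool) (A B : seq nat) :
  count (fun p => P p.1 p.2) [seq (i, j) | i <- A, j <- B] =
  \sum_(i <- A) \sum_(j <- B) P i j.
Proof.
elim: A => [|a A IH] /=; first by rewrite big_nil.
rewrite count_cat count_map IH big_cons; congr (_ + _); clear IH.
by elim: B => [|b B IHB] /=; rewrite ?big_nil // big_cons IHB.
Qed.

Lemma sum_mem (A S : seq nat) (G : nat -> nat) : uniq S -> uniq A ->
  {subset A <= S} -> \sum_(i <- S) (i \in A) * G i = \sum_(i <- A) G i.
Proof.
move=> uS uA sub.
rewrite (eq_bigr (fun i => if i \in A then G i else 0)); last first.
  by move=> i _; case: (i \in A); rewrite ?mul1n ?mul0n.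
rewrite -big_mkcond -big_filter; apply: perm_big.
apply: uniq_perm; first by rewrite filter_uniq.
  by [].
by move=> z; rewrite mem_filter; apply/andP/idP => [[]//|H]; split => //; apply: sub.
Qed.

Lemma subtrees_labels t s : s \in subtrees t -> {subset labels s <= labels t}.
Proof.
elim: t => [|l IHl v r IHr] //=; rewrite inE mem_cat => /or3P [/eqP -> //| H | H] z zs.
- by rewrite mem_cat (IHl H z zs).
- by rewrite mem_cat inE (IHr H z zs) !orbT.
Qed.

Definition invP (i j : nat) (s : btree) : bool :=
  if s is Node l v r then (i \in labels l) && ((j \in labels r) || (j == v)) else false.

Lemma has_invP t i j : has (invP i j) (subtrees t) -> (i \in labels t) && (j \in labels t).
Proof.
move=> /hasP [s sin]; have sub := subtrees_labels sin.
case: s sin sub => [|l v r] //= _ sub /andP [il jr].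
apply/andP; split; apply: sub; rewrite /= mem_cat ?il //.
by move: jr => /orP [H|/eqP ->]; rewrite ?inE ?H ?eqxx !orbT.
Qed.

Lemma is_invE t i j : is_inv t i j = (j < i) && has (invP i j) (subtrees t).
Proof. by []. Qed.

Lemma is_inv_node l v r i j : uniq (labels (Node l v r)) ->
  (is_inv (Node l v r) i j : nat) =
    (i \in labels l) * ((j \in labels l) * is_inv l i j)
  + (i \in labels r) * ((j \in labels r) * is_inv r i j)
  + (i \in labels l) * ((j \in v :: labels r) * (j < i)).
Proof.
rewrite /= cat_uniq => /and3P [ul dis ur].
have disj z : z \in labels l -> z \notin v :: labels r.
  by move=> zl; apply/negP => zr; move/hasPn: dis => /(_ z zr); rewrite zl.
rewrite !is_invE /= has_cat.
case El: (has (invP i j) (subtrees l)).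
  have /andP [il jl] := has_invP El.
  have := disj i il; have := disj j jl; rewrite !inE !negb_or => /andP [jv jr] /andP [iv ir].
  by rewrite il jl (negbTE jr) (negbTE ir) (negbTE jv) orbT /=; case: (j < i).
case Er: (has (invP i j) (subtrees r)).
  have /andP [ir jr] := has_invP Er.
  have il : i \notin labels l by apply/negP => /disj; rewrite inE ir orbT.
  by rewrite (negbTE il) ir jr /=; case: (j < i); rewrite /= ?mul0n ?muln0 ?mul1n ?addn0.
rewrite inE; case: (i \in labels l); case: (j \in labels r); case: (j == v); case: (j < i);
  case: (j \in labels l); by case: (i \in labels r).
Qed.

Lemma inv_tree_invr t : uniq (labels t) -> inv_tree t = invr t.
Proof.
rewrite /inv_tree size_filter count_allpairs.
elim: t => [|l IHl v r IHr] /=; first by rewrite big_nil.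
move=> U; have U' := U.
move: U'; rewrite cat_uniq => /and3P [ul dis ur'].
have ur : uniq (labels r) by case/andP: ur'.
have subl : {subset labels l <= labels l ++ v :: labels r}.
  by move=> z zl; rewrite mem_cat zl.
have subr : {subset labels r <= labels l ++ v :: labels r}.
  by move=> z zr; rewrite mem_cat inE zr !orbT.
have subvr : {subset v :: labels r <= labels l ++ v :: labels r}.
  by move=> z zr; rewrite mem_cat zr orbT.
set Lt := labels l ++ v :: labels r.
have sm (A : seq nat) (G : nat -> nat -> nat) : uniq A -> {subset A <= Lt} ->
    forall (B : seq nat), uniq B -> {subset B <= Lt} ->
    \sum_(i <- Lt) \sum_(j <- Lt) (i \in A) * ((j \in B) * G i j) =
    \sum_(i <- A) \sum_(j <- B) G i j.
  move=> uA sA B uB sB.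
  rewrite -(sum_mem _ U uA sA); apply: eq_bigr => i _.
  by rewrite -big_distrr /= (sum_mem _ U uB sB).
transitivity (\sum_(i <- Lt) \sum_(j <- Lt) (i \in labels l) * ((j \in labels l) * is_inv l i j)
  + \sum_(i <- Lt) \sum_(j <- Lt) (i \in labels r) * ((j \in labels r) * is_inv r i j)
  + \sum_(i <- Lt) \sum_(j <- Lt) (i \in labels l) * ((j \in v :: labels r) * (j < i))).
  rewrite -!big_split; apply: eq_bigr => i _; rewrite -!big_split; apply: eq_bigr => j _.
  exact: is_inv_node.
rewrite !sm //.
by rewrite IHl // IHr.
Qed.

Lemma labels_tmap f t : labels (tmap f t) = map f (labels t).
Proof. by elim: t => //= l IHl v r IHr; rewrite IHl IHr map_cat. Qed.

Lemma tmap_leaf f t : (tmap f t == Leaf) = (t == Leaf).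
Proof. by case: t. Qed.

Lemma leaves_tmap f t : leaves (tmap f t) = leaves t.
Proof.
elim: t => //= l IHl v r IHr.
by case: l IHl => [|l1 v1 r1] /= IHl; case: r IHr => [|l2 v2 r2] /= IHr; rewrite ?IHl ?IHr.
Qed.

Lemma unary_tmap f t : unary (tmap f t) = unary t.
Proof. by elim: t => //= l IHl v r IHr; rewrite !tmap_leaf IHl IHr. Qed.

Lemma invr_tmap f t : {in labels t &, forall i j, (f j < f i) = (j < i)} ->
  invr (tmap f t) = invr t.
Proof.
elim: t => //= l IHl v r IHr mono.
rewrite IHl ?IHr; last first.
- by move=> i j il jl; apply: mono; rewrite mem_cat inE ?il ?jl ?orbT.
- by move=> i j il jl; apply: mono; rewrite mem_cat inE ?il ?jl ?orbT.
congr (_ + _); rewrite !labels_tmap -map_cons /cross big_map.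
apply: eq_big_seq => i il; rewrite big_map; apply: eq_big_seq => j jr.
by rewrite mono // mem_cat ?il // jr orbT.
Qed.

Lemma cross_perm A A' B B' : perm_eq A A' -> perm_eq B B' -> cross A B = cross A' B'.
Proof.
move=> pA pB; rewrite /cross (perm_big _ pA); apply: eq_bigr => i _.
exact: perm_big.
Qed.

Lemma cross_consl x A B : {in B, forall j, x < j} -> cross (x :: A) B = cross A B.
Proof.
move=> H; rewrite /cross big_cons big1_seq ?add0n // => j /andP [_ jB].
by rewrite ltnNge ltnW ?H.
Qed.

Lemma cross_consr x A B : {in A, forall i, x < i} -> cross A (x :: B) = size A + cross A B.
Proof.
move=> H; rewrite /cross.
rewrite (eq_big_seq (fun i => 1 + \sum_(j <- B) (j < i))); last first.
  by move=> i iA; rewrite big_cons H.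
by rewrite big_split /= sum1_size.
Qed.

Lemma sorted_sub_gt x s A : sorted ltn (x :: s) -> subseq A s -> {in A, forall i, x < i}.
Proof. by move=> H sA i iA; apply: (sorted_cons_lt H); apply: (mem_subseq sA). Qed.

Local Open Scope ring_scope.

Definition qp (R : comRingType) (q : R) n : R := \prod_(1 <= i < n.+1) (1 - q ^+ i).

Lemma qpS (R : comRingType) (q : R) n : qp q n.+1 = qp q n * (1 - q ^+ n.+1).
Proof. by rewrite /qp big_nat_recr. Qed.

Lemma qp0 (R : comRingType) (q : R) : qp q 0 = 1.
Proof. by rewrite /qp big_geq. Qed.

Definition Gs (R : comRingType) (q : R) (s : seq nat) (k : nat) : R :=
  \sum_(p <- splits s | size p.2 == k) q ^+ cross p.1 p.2.

Lemma Gs_cons (R : comRingType) (q : R) x s k : sorted ltn (x :: s) ->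
  Gs q (x :: s) k = Gs q s k +
    (if k is k'.+1 then q ^+ (size s - k') * Gs q s k' else 0).
Proof.
move=> Hs; rewrite /Gs /= big_cat !big_map /=; congr (_ + _).
  rewrite big_seq_cond [RHS]big_seq_cond; apply: eq_bigr => -[A B] /andP [Hp _] /=.
  have /andP [_ sB] := splits_sub Hp.
  by rewrite cross_consl //; apply: (sorted_sub_gt Hs sB).
case: k => [|k]; first by rewrite big_pred0.
rewrite mulr_sumr big_seq_cond [RHS]big_seq_cond; apply: eq_bigr => -[A B] /andP [Hp /= /eqP HB].
have /andP [sA _] := splits_sub Hp.
have /= E := @splits_size s (A, B) Hp.
rewrite cross_consr; last exact: (sorted_sub_gt Hs sA).
rewrite exprD; congr (q ^+ _ * _).
by move: HB => [<-]; rewrite -E addnK.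
Qed.

Lemma Gs_big (R : comRingType) (q : R) s k : (size s < k)%N -> Gs q s k = 0.
Proof.
move=> H; rewrite /Gs big_seq_cond big_pred0 // => -[A B] /=.
apply/negP => /andP [Hp /eqP HB]; have /= E := @splits_size s (A, B) Hp.
by move: H; rewrite -E HB ltnNge leq_addl.
Qed.

Lemma Gs_qbin (R : comRingType) (q : R) s k : sorted ltn s -> (k <= size s)%N ->
  Gs q s k * qp q k * qp q (size s - k) = qp q (size s).
Proof.
elim: s k => [|x s IH] k Hs Hk.
  move: Hk; rewrite leqn0 => /eqP ->; rewrite /Gs /= big_cons big_nil /= /cross big_nil.
  by rewrite !qp0 !mulr1 addr0.
have Hs' : sorted ltn s := path_sorted Hs.
rewrite Gs_cons //.
case: k Hk => [|k] Hk /=.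
  by rewrite addr0 subn0 qpS -[in RHS](IH 0%N) // subn0 !mulrA.
rewrite subSS; rewrite ltnS in Hk.
case: (ltnP k (size s)) => Hks.
  set d := (size s - k.+1)%N.
  have Md : (size s - k = d.+1)%N by rewrite /d subnSK.
  have E1 := IH k.+1 Hs' Hks.
  have E2 := IH k Hs' (ltnW Hks).
  rewrite Md in E2 *.
  transitivity (Gs q s k.+1 * qp q k.+1 * qp q d * (1 - q ^+ d.+1) +
     q ^+ d.+1 * (Gs q s k * qp q k * qp q d.+1) * (1 - q ^+ k.+1)).
    rewrite [qp q d.+1]qpS [qp q k.+1]qpS; ring.
  rewrite E1 E2 qpS.
  have -> : (size s).+1 = (d.+1 + k.+1)%N.
    by rewrite -Md addnS subnK // ltnW.
  rewrite exprD; ring.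
have Eks : k = size s by apply/eqP; rewrite eqn_leq Hk Hks.
subst k; rewrite Gs_big // add0r subnn qp0 mulr1 expr0 mul1r qpS.
by rewrite -[in RHS](IH (size s)) // subnn qp0 !mulr1 mulrA.
Qed.

Definition wt (R : comRingType) (q x y : R) (t : btree) : R :=
  x ^+ leaves t * y ^+ unary t * q ^+ invr t.

Definition Fs (R : comRingType) (q x y : R) (s : seq nat) : R :=
  \sum_(t <- gen (size s) s) wt q x y t.

Lemma Fs_relabel (R : comRingType) (q x y : R) s : sorted ltn s ->
  Fs q x y s = Fs q x y (iota 1 (size s)).
Proof.
move=> Hs; set k := size s.
set f := fun i => nth 0%N s i.-1.
have Es : s = map f (iota 1 k).
  rewrite (iotaDl 1 0) -map_comp.
  rewrite (eq_map (g := nth 0%N s)); last by move=> i /=.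
  by rewrite map_nth_iota0 // take_size.
rewrite /Fs size_iota -/k.
have -> : gen k s = gen k (map f (iota 1 k)) by rewrite -Es.
rewrite gen_map big_map.
apply: eq_big_seq => t tin.
have [pt _ _] := gen_spec1 (s := iota 1 k) (t := t) (fu := k) ltac:(by rewrite size_iota) (iota_ltn_sorted 1 k) tin.
have mono : {in labels t &, forall i j, ((f j < f i) = (j < i))%N}.
  move=> i j; rewrite !(perm_mem pt) !mem_iota !add1n !ltnS => /andP [i1 ik] /andP [j1 jk].
  have sn := sorted_ltn_nth ltn_trans 0%N Hs.
  have ik' : (i.-1 < k)%N by rewrite prednK.
  have jk' : (j.-1 < k)%N by rewrite prednK.
  rewrite /f; case: (ltngtP j i) => H.
  - by apply: sn; rewrite ?inE // -ltnS !prednK.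
  - by apply/negbTE; rewrite -leqNgt ltnW // sn // ?inE // -ltnS !prednK.
  - by rewrite H ltnn.
by rewrite /wt leaves_tmap unary_tmap invr_tmap.
Qed.


Lemma EII_Fs (R : comRingType) (q x y : R) m : (0 < m)%N ->
  EII q x y m = Fs q x y (iota 1 m).
Proof.
case: m => // m _; rewrite /EII /Fs size_iota; set m1 := m.+1.
have szi : (size (iota 1 m1) <= m1)%N by rewrite size_iota.
rewrite -big_filter.
have P : perm_eq [seq t <- undup (all_trees (iota 1 m1) m1) | andreII m1 t]
                 (gen m1 (iota 1 m1)).
  apply: uniq_perm; first by rewrite filter_uniq // undup_uniq.
    exact: gen_uniq szi (iota_ltn_sorted 1 m1).
  move=> t; rewrite mem_filter mem_undup; apply/andP/idP.
    by case=> /and3P [p i a] _; apply: gen_spec2 => //; apply: iota_ltn_sorted.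
  move=> tin; have [p i a] := gen_spec1 szi (iota_ltn_sorted 1 m1) tin.
  split; first by rewrite /andreII p i a.
  apply: all_trees_mem.
    by apply: (leq_trans (height_le t)); rewrite (perm_size p) size_iota.
  by apply/allP => z; rewrite (perm_mem p).
rewrite (perm_big _ P); apply: eq_big_seq => t tin.
have [p _ _] := gen_spec1 szi (iota_ltn_sorted 1 m1) tin.
by rewrite /wt inv_tree_invr // (perm_uniq p) iota_uniq.
Qed.

Lemma Fs_EII (R : comRingType) (q x y : R) s : sorted ltn s -> s != [::] ->
  Fs q x y s = EII q x y (size s).
Proof.
move=> Hs sn; rewrite Fs_relabel // EII_Fs //.
by case: s sn {Hs}.
Qed.

Lemma Fs_nil (R : comRingType) (q x y : R) : Fs q x y [::] = 1.
Proof. by rewrite /Fs /= big_cons big_nil /wt /= !expr0 !mulr1 addr0. Qed.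

Lemma splits_nil_sum (R : comRingType) s (F : seq nat * seq nat -> R) :
  \sum_(p <- splits s | p.1 == [::]) F p = F ([::], s).
Proof.
elim: s F => [|x s IH] F /=; first by rewrite big_cons big_nil /= addr0.
rewrite big_cat !big_map /= big_pred0 // add0r.
exact: (IH (fun p => F (p.1, x :: p.2))).
Qed.

Lemma node_term (R : comRingType) (q x y : R) N A B :
  (A, B) \in splits (iota 3 N) ->
  \sum_(l <- gen N.+1 A) \sum_(r <- gen N.+1 (2 :: B)) wt q x y (Node l 1 r) =
  (if A == [::] then y else q ^+ (2 * size A + cross A B)) * Fs q x y A * Fs q x y (2 :: B).
Proof.
move=> Hp.
have /andP [/= sA sB] := splits_sub Hp.
have /= E := @splits_size _ (A, B) Hp; rewrite size_iota in E.
have Asort : sorted ltn A := subseq_sorted ltn_trans sA (iota_ltn_sorted 3 N).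
have Bsort : sorted ltn (2 :: B).
  apply: (subseq_sorted ltn_trans _ (iota_ltn_sorted 2 N.+1)).
  by rewrite /= ?eqxx.
have szA : (size A <= N.+1)%N by apply: leqW; rewrite -E leq_addr.
have szB : (size (2 :: B) <= N.+1)%N by rewrite /= -E ltnS leq_addl.
have Agt i : i \in A -> (2 < i)%N.
  by move=> iA; have := mem_subseq sA iA; rewrite mem_iota => /andP [].
rewrite /Fs -(gen_fuel szA (leqnn _)) -(gen_fuel szB (leqnn _)).
rewrite [X in _ = X * _]mulr_sumr mulr_suml; apply: eq_big_seq => l lin.
rewrite mulr_sumr; apply: eq_big_seq => r rin.
have [pl _ _] := gen_spec1 szA Asort lin.
have [pr _ _] := gen_spec1 szB Bsort rin.
have rnl : r != Leaf by apply/eqP => Er; move: pr; rewrite Er => /perm_size.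
have lA : (l == Leaf) = (A == [::]).
  apply/eqP/eqP => [El|EA]; first by move: pl; rewrite El => /perm_size /esym /size0nil.
  by apply: labels_nil; rewrite (perm_size pl) EA.
have Hleaves : leaves (Node l 1 r) = (leaves l + leaves r)%N.
  by case: r rnl {rin pr} => [|l2 v2 r2] //; case: l {lin pl lA}.
have Hun : unary (Node l 1 r) = ((l == Leaf) + unary l + unary r)%N.
  by rewrite /= (negbTE rnl) addbF.
have Hcr : cross (labels l) (1 :: labels r) = (2 * size A + cross A B)%N.
  rewrite (cross_perm (A' := A) (B' := 1 :: 2 :: B) pl) ?perm_cons //.
  rewrite cross_consr; last by move=> i /Agt /ltnW.
  rewrite cross_consr; last by move=> i /Agt.
  by rewrite mul2n -addnn addnA.
rewrite /wt Hleaves Hun /= Hcr lA.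
case: (A =P [::]) => [EA|/eqP nA] /=.
  have El : l = Leaf by apply/eqP; rewrite lA EA.
  subst l; rewrite EA /cross big_nil muln0 !add0n !addn0 add1n exprS !expr0; ring.
rewrite add0n !exprD; ring.
Qed.

Lemma qp_neq0 (R : fieldType) (q : R) N :
  (forall i : nat, (0 < i < N.+1)%N -> q ^+ i != 1) ->
  forall j, (j <= N)%N -> qp q j != 0.
Proof.
move=> Hq; elim=> [|j IH] Hj; first by rewrite qp0 oner_neq0.
rewrite qpS mulf_neq0 ?IH ?(ltnW Hj) // subr_eq0 eq_sym Hq //.
Qed.

Arguments EII : simpl never.
Unset Implicit Arguments.

Theorem theorem6p15 (R : fieldType) (q x y : R) (n : nat) :
  (1 <= n)%N ->
  (forall i : nat, (0 < i < n)%N -> q ^+ i != 1) ->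
  EII q x y n.+1 =
    y * EII q x y n +
    \sum_(k < n.-1)
      q ^+ (2 * (n - k - 1)) * qbinom q n.-1 k
        * EII q x y k.+1 * EII q x y (n - k - 1).
Proof.
case: n => // N _ Hq.
set S := iota 3 N.
have Ssort : sorted ltn S := iota_ltn_sorted 3 N.
have step : EII q x y N.+2 = \sum_(p <- splits S)
    (if p.1 == [::] then y else q ^+ (2 * size p.1 + cross p.1 p.2))
      * Fs q x y p.1 * Fs q x y (2 :: p.2).
  rewrite EII_Fs // /Fs size_iota /= big_flatten big_map.
  apply: eq_big_seq => -[A B] Hp; rewrite big_allpairs_dep; exact: node_term.
rewrite step (bigID (fun p => p.1 == [::])) /= splits_nil_sum /= Fs_nil mulr1.
rewrite Fs_EII //; last exact: (iota_ltn_sorted 2 N.+1).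
rewrite /= size_iota; congr (_ + _).
have Gq k : (k < N)%N -> qbinom q N k = Gs q S k.
  move=> kN.
  have nz1 : qp q k != 0 by apply: (qp_neq0 Hq); apply: ltnW.
  have nz2 : qp q (N - k) != 0 by apply: (qp_neq0 Hq); apply: leq_subr.
  rewrite /qbinom.
  change (qp q N / (qp q k * qp q (N - k)) = Gs q S k).
  have := Gs_qbin q (k := k) Ssort; rewrite size_iota => /(_ (ltnW kN)) <-.
  by rewrite -[Gs q S k * _ * _]mulrA mulfK // mulf_neq0.
transitivity (\sum_(k < N) \sum_(p <- splits S)
   (if size p.2 == k then q ^+ (2 * (N - k)) * q ^+ cross p.1 p.2 * EII q x y k.+1 * EII q x y (N - k) else 0)); last first.
  apply: eq_bigr => k _.
  have kN := ltn_ord k.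
  rewrite Gq // -big_mkcond /Gs.
  have E1 : (N.+1 - k - 1 = N - k)%N by rewrite subn1 subSn // ltnW.
  rewrite E1; move: (EII q x y k.+1) (EII q x y (N - k)) => e1 e2.
  rewrite mulr_sumr mulr_suml mulr_suml; apply: eq_bigr => p _; ring.
rewrite exchange_big big_mkcond /=.
apply: eq_big_seq => -[A B] Hp /=.
have /= E := @splits_size _ (A, B) Hp; rewrite size_iota in E.
case: (A =P [::]) => [EA|/eqP nA] /=.
  rewrite big1 // => k _; rewrite EA /= add0n in E.
  by rewrite E (gtn_eqF (ltn_ord k)).
have HB : (size B < N)%N.
  by rewrite -E -{1}(add0n (size B)) ltn_add2r lt0n size_eq0.
rewrite (bigD1 (Ordinal HB)) //= eqxx big1 ?addr0; last first.
  by move=> k /eqP kB; case: ifP => // /eqP kB'; case: kB; apply: val_inj.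
have /andP [/= sA _] := splits_sub Hp.
have Asort : sorted ltn A := subseq_sorted ltn_trans sA Ssort.
have Bsort : sorted ltn (2 :: B).
  apply: (subseq_sorted ltn_trans _ (iota_ltn_sorted 2 N.+1)).
  by case/andP: (splits_sub Hp) => _ sB; rewrite /= ?eqxx.
rewrite Fs_EII // [Fs _ _ _ (2 :: B)]Fs_EII // [size (2 :: B)]/= -E addnK exprD; ring.
Qed.
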